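(* Let $n\in\mathbb{N}$, $a<b$, and let $f:[a,b]\to\mathbb{R}$ be $(2n-1)$-convex. If $x_1=a$, $x_2,\dots,x_n\in(a,b)$ and $x_{n+1}=b$, then there exists a polynomial $p\in\Pi_{2n-1}$ such that $p(x_i)=f(x_i)$ for $i=1,\dots,n+1$ and $p(x)\ge f(x)$ for all $x\in[a,b]$.
   Context: $\Pi_m$ denotes the set of real polynomials of degree at most $m$. Divided differences are defined recursively by $[x_1;f]:=f(x_1)$ and $[x_1,\dots,x_{m+1};f]:=\frac{[x_2,\dots,x_{m+1};f]-[x_1,\dots,x_m;f]}{x_{m+1}-x_1}$ for pairwise distinct points. For $m\in\mathbb{N}$, a function $f$ on an interval $I$ is called $m$-convex if $[x_1,\dots,x_{m+2};f]\ge 0$ for all pairwise distinct $x_1,\dots,x_{m+2}\in I$. *)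

(* Defs.v *)
From HB Require Import structures.
From mathcomp Require Import all_boot all_order all_algebra.
From mathcomp Require Import reals.
Set Implicit Arguments. Unset Strict Implicit. Unset Printing Implicit Defensive.
Import Order.TTheory GRing.Theory Num.Theory.
Local Open Scope ring_scope.

(* Divided difference of f on the points s = [:: x_1; ...; x_(k+1)], computed
   recursively following
   [x_1;f] = f x_1,
   [x_1,...,x_(k+1);f] = ([x_2,...,x_(k+1);f] - [x_1,...,x_k;f]) / (x_(k+1) - x_1). *)
Fixpoint dd_aux {R : fieldType} (f : R -> R) (k : nat) (s : seq R) : R :=
  match k with
  | 0%N => f (head 0 s)
  | k'.+1 => (dd_aux f k' (behead s) - dd_aux f k' (take k'.+1 s))
             / (nth 0 s k'.+1 - nth 0 s 0)
  end.

Definition divdiff {R : fieldType} (f : R -> R) (s : seq R) : R :=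
  dd_aux f (size s).-1 s.

Definition mconvex_on {R : realFieldType} (m : nat) (a b : R) (f : R -> R) : Prop :=
  forall s : seq R, size s = (m + 2)%N -> uniq s ->
    all (fun x => (a <= x) && (x <= b)) s -> 0 <= divdiff f s.

(* Main.v *)
Require Import Defs.
From HB Require Import structures.
From mathcomp Require Import all_boot all_order all_algebra.
From mathcomp Require Import reals classical_sets.
From mathcomp Require Import ring lra zify polyrcf.
Import Order.TTheory GRing.Theory Num.Theory.
Local Open Scope ring_scope.
Set Implicit Arguments. Unset Strict Implicit. Unset Printing Implicit Defensive.

Section DD.
Variable R : fieldType.
Implicit Types (f g : R -> R) (s m : seq R) (u v x : R).

Definition Pr s x := \prod_(y <- s | y != x) (x - y).
Definition lag f s := \sum_(x <- s) f x / Pr s x.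

Lemma Pr_cons y s x : Pr (y :: s) x = if y != x then (x - y) * Pr s x else Pr s x.
Proof. by rewrite /Pr big_cons. Qed.

Lemma Pr_rcons s y x : Pr (rcons s y) x = if y != x then Pr s x * (x - y) else Pr s x.
Proof. by rewrite /Pr big_rcons /=; case: (y != x); rewrite ?mulr1. Qed.

Lemma Pr_neq0 s x : Pr s x != 0.
Proof. by rewrite /Pr prodf_seq_neq0; apply/allP => y _; apply/implyP; rewrite subr_eq0 eq_sym. Qed.

Lemma divdiff1 f x : divdiff f [:: x] = f x.
Proof. by []. Qed.

Lemma divdiff_rec f u m v :
  divdiff f (u :: rcons m v) = (divdiff f (rcons m v) - divdiff f (u :: m)) / (v - u).
Proof.
rewrite /divdiff /= size_rcons /=.
have -> : take (size m) (rcons m v) = m by rewrite -cats1 take_size_cat.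
by rewrite nth_rcons ltnn eqxx.
Qed.

Lemma lag_rec f u m v : uniq (u :: rcons m v) ->
  lag f (u :: rcons m v) = (lag f (rcons m v) - lag f (u :: m)) / (v - u).
Proof.
rewrite /= rcons_uniq mem_rcons inE negb_or => /andP[/andP[uv um] /andP[vm um']].
have vu : v - u != 0 by rewrite subr_eq0 eq_sym.
rewrite /lag !big_cons !big_rcons /= !Pr_cons !Pr_rcons eqxx (negbTE uv) eq_sym uv /=.
rewrite eqxx.
set S1 := \sum_(x <- m) _.
set S2 := \sum_(x <- m) _.
set S3 := \sum_(x <- m) _.
have -> : S1 = (S2 - S3) / (v - u).
  rewrite /S1 /S2 /S3 -sumrB mulr_suml; apply: eq_big_seq => x xm.
  have xu : x != u by apply: contraNneq um => <-.
  have xv : x != v by apply: contraNneq vm => <-.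
  rewrite !Pr_cons !Pr_rcons (eq_sym u) (eq_sym v) xu xv.
  have := Pr_neq0 m x; set P := Pr m x => P0.
  have h1 : x - u != 0 by rewrite subr_eq0.
  have h2 : x - v != 0 by rewrite subr_eq0.
  by field; rewrite P0 h1 h2 vu.
have := Pr_neq0 m u; have := Pr_neq0 m v; set A := Pr m u; set B := Pr m v => B0 A0.
have h3 : u - v != 0 by rewrite subr_eq0.
by field; rewrite A0 B0 vu h3.
Qed.

Lemma divdiff_lag f s : uniq s -> s != [::] -> divdiff f s = lag f s.
Proof.
move: {2}(size s) (leqnn (size s)) => k; elim: k s => [|k IH] s.
  by case: s.
case: s => [//|u s]; case/lastP: s => [|m v] Hs us _.
  by rewrite divdiff1 /lag /Pr !big_cons !big_nil eqxx divr1 addr0.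
move: Hs; rewrite /= size_rcons ltnS => Hs.
move: (us); rewrite /= rcons_uniq mem_rcons inE negb_or => /andP[/andP[uv um] /andP[vm um']].
rewrite divdiff_rec lag_rec // !IH //.
- by rewrite /= um um'.
- by rewrite size_rcons.
- by rewrite rcons_uniq vm um'.
- by case: (m).
Qed.

Lemma lag_perm f s t : perm_eq s t -> lag f s = lag f t.
Proof.
move=> pst; rewrite /lag (perm_big _ pst); apply: eq_bigr => x _.
by rewrite /Pr (perm_big _ pst).
Qed.

Lemma lag_eq f g s : {in s, f =1 g} -> lag f s = lag g s.
Proof. by move=> fg; rewrite /lag; apply: eq_big_seq => x xs; rewrite fg. Qed.

Lemma divdiff_perm f s t : uniq s -> perm_eq s t -> divdiff f s = divdiff f t.
Proof.
move=> us pst; have ut : uniq t by rewrite -(perm_uniq pst).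
case: s us pst => [|x s] us pst.
  by move/perm_size: pst; case: t ut.
have tn : t != [::] by case: t pst ut => // /perm_size.
by rewrite !divdiff_lag // (lag_perm _ pst).
Qed.

Lemma divdiff_eq f g s : uniq s -> s != [::] -> {in s, f =1 g} -> divdiff f s = divdiff g s.
Proof.
case: s => [|x s] us // _ fg.
by rewrite !divdiff_lag // (lag_eq fg).
Qed.


Lemma perm_mid (N X : seq R) u : perm_eq (N ++ u :: X) (u :: N ++ X).
Proof. by rewrite -cat1s perm_catCA. Qed.

Lemma divdiff_dd f N Y : uniq (N ++ Y) -> Y != [::] ->
  divdiff (fun x => divdiff f (rcons N x)) Y = divdiff f (N ++ Y).
Proof.
move: {2}(size Y) (leqnn (size Y)) => k; elim: k Y => [|k IH] Y.
  by case: Y.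
case: Y => [//|u Y]; case/lastP: Y => [|m v] Hs uNY _.
  by rewrite divdiff1 cats1.
move: Hs; rewrite /= size_rcons ltnS => Hs.
have uNY' : uniq (u :: rcons (N ++ m) v).
  by rewrite rcons_cat -(perm_uniq (perm_mid N _ u)).
have uNm : uniq (N ++ u :: m).
  by move: uNY; rewrite -cats1 -cat_cons catA cat_uniq => /andP[].
rewrite divdiff_rec !IH //; last first.
- by case: (m).
- by move: uNY; rewrite (perm_uniq (perm_mid N _ u)) => /andP[].
- by rewrite size_rcons.
rewrite (divdiff_perm f uNY (perm_mid N _ u)) -rcons_cat divdiff_rec.
rewrite rcons_cat; congr ((_ - _) / _).
apply: divdiff_perm => //.
by rewrite perm_mid.
Qed.


Definition ip f s : {poly R} :=
  \sum_(x <- s) (f x / Pr s x) *: \prod_(y <- s | y != x) ('X - y%:P).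
Definition pi s : {poly R} := \prod_(y <- s) ('X - y%:P).

Lemma ip_horner f s w :
  (ip f s).[w] = \sum_(x <- s) f x / Pr s x * \prod_(y <- s | y != x) (w - y).
Proof.
rewrite /ip horner_sum; apply: eq_bigr => x _.
by rewrite hornerZ horner_prod; congr (_ * _); apply: eq_bigr => y _; rewrite hornerXsubC.
Qed.

Lemma pi_horner s w : (pi s).[w] = \prod_(y <- s) (w - y).
Proof. by rewrite /pi horner_prod; apply: eq_bigr => y _; rewrite hornerXsubC. Qed.

Lemma ip_eq f g s : {in s, f =1 g} -> ip f s = ip g s.
Proof. by move=> fg; rewrite /ip; apply: eq_big_seq => x xs; rewrite fg. Qed.

Lemma ip_interp f s t : uniq s -> t \in s -> (ip f s).[t] = f t.
Proof.
move=> us ts; rewrite ip_horner [LHS](bigD1_seq t) //= -/(Pr s t) divfK ?Pr_neq0 //.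
rewrite [X in _ + X]big1 ?addr0 //.
move=> x xt; apply/eqP; rewrite mulf_eq0; apply/orP; right.
apply/negPn; rewrite prodf_seq_neq0; apply/allPn; exists t => //.
by rewrite eq_sym xt subrr eqxx.
Qed.

Lemma divdiff_rem f s w : uniq s -> w \notin s ->
  divdiff f (rcons s w) * (pi s).[w] = f w - (ip f s).[w].
Proof.
move=> us ws.
rewrite divdiff_lag ?rcons_uniq ?ws //; last by case: (s).
have Pw : Pr s w = (pi s).[w].
  rewrite pi_horner /Pr big_seq_cond [RHS]big_seq_cond; apply: eq_bigl => y.
  by case ys: (y \in s) => //=; apply: contraNneq ws => <-.
rewrite /lag big_rcons /= Pr_rcons eqxx Pw mulrDl divfK; last first.
  by rewrite -Pw Pr_neq0.
rewrite addrC ip_horner -sumrN mulr_suml; congr (_ + _).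
apply: eq_big_seq => x xs.
have wx : w != x by apply: contraNneq ws => ->.
rewrite Pr_rcons wx pi_horner (bigD1_seq x) //=.
have := Pr_neq0 s x; set P := Pr s x => P0.
have h : x - w != 0 by rewrite subr_eq0 eq_sym.
by field; rewrite P0 h.
Qed.


Lemma size_pi s : size (pi s) = (size s).+1.
Proof. by rewrite /pi size_prod_XsubC. Qed.

Lemma size_ip f s : (size (ip f s) <= size s)%N.
Proof.
rewrite /ip (leq_trans (size_sum _ _ _)) //; apply/bigmax_leqP_seq => x xs _.
rewrite (leq_trans (size_scale_leq _ _)) // -big_filter size_prod_XsubC size_filter.
rewrite -(count_predC (fun y => y != x) s) -addn1 leq_add2l -has_count.
by apply/hasP; exists x => //=; rewrite eqxx.
Qed.

End DD.

Section Real.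
Variable R : realType.
Implicit Types (f g : R -> R) (s : seq R) (u v x : R).

Lemma poly_pos_near (Q : {poly R}) z : 0 < Q.[z] ->
  exists2 d, 0 < d & forall w, `|w - z| < d -> 0 < Q.[w].
Proof.
move=> Qz; have [d d0 Hd] := poly_cont z Q Qz; exists d => // w /Hd h.
rewrite distrC in h; have := ler_norm (Q.[z] - Q.[w]); lra.
Qed.

Lemma avoid (E : seq R) lo hi : lo < hi -> exists l, exists h,
  [/\ lo <= l, l < h, h <= hi & forall e, e \in E -> ~~ ((l < e) && (e < h))].
Proof.
move=> lohi; elim: E => [|e E [l [h [H1 H2 H3 H4]]]].
  by exists lo, hi; split => //.
case: (boolP ((l < e) && (e < h))) => [/andP[le eh]|neh].
  exists l, e; split => //; first by rewrite (le_trans (ltW eh)).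
  move=> e'; rewrite inE => /orP[/eqP->|/H4]; first by rewrite ltxx andbF.
  apply: contra => /andP[-> /= e'e]; exact: lt_trans e'e eh.
exists l, h; split => // e'; rewrite inE => /orP[/eqP->//|/H4//].
Qed.

Lemma pick (E : seq R) lo hi : lo < hi -> exists w, (lo < w < hi) /\ w \notin E.
Proof.
move=> /(avoid E) [l [h [H1 H2 H3 H4]]].
exists ((l + h) / 2); split.
  apply/andP; split; lra.
apply/negP => /H4; rewrite negb_and -!leNgt; move/orP => [] ?; lra.
Qed.

Lemma points (E : seq R) (lo hi : R) (m : nat) : lo < hi -> exists Y,
  [/\ size Y = m, uniq Y, all (fun y => lo < y < hi) Y & all (fun y => y \notin E) Y].
Proof.
move=> lohi; elim: m => [|m [Y [H1 H2 H3 H4]]]; first by exists [::].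
have [w [w1 w2]] := pick (E ++ Y) lohi.
move: w2; rewrite mem_cat negb_or => /andP[wE wY].
by exists (w :: Y); rewrite /= H1 wY H2 w1 wE H3 H4.
Qed.


Definition Dom (a b : R) (E : seq R) (x : R) : bool := (a < x < b) && (x \notin E).
Definition Kc (j : nat) (D : pred R) (F : R -> R) :=
  forall s, size s = j -> uniq s -> all D s -> 0 <= divdiff F s.

Lemma pi_root s w : w \in s -> (pi s).[w] = 0.
Proof. by move=> ws; apply/eqP; rewrite -/(root _ w) root_prod_XsubC. Qed.

Lemma key a b z E F m Y Y' : a < z < b -> Kc m.+1 (Dom a b E) F ->
  size Y = m -> size Y' = m -> uniq Y -> uniq Y' ->
  all (Dom a b E) Y -> all (Dom a b E) Y' ->
  0 < (pi Y).[z] -> (pi Y').[z] < 0 -> (ip F Y).[z] <= (ip F Y').[z].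
Proof.
move=> /andP[az zb] HK sY sY' uY uY' DY DY' p1 p2.
rewrite leNgt; apply/negP => H.
have [d1 d10 H1] := poly_pos_near p1.
have p2' : 0 < (-(pi Y')).[z] by rewrite hornerN oppr_gt0.
have [d2 d20 H2] := poly_pos_near p2'.
have p3 : 0 < (ip F Y - ip F Y').[z] by rewrite hornerD hornerN subr_gt0.
have [d3 d30 H3] := poly_pos_near p3.
pose d := Order.min d1 (Order.min d2 (Order.min d3 (b - z))).
have dd1 : d <= d1 by rewrite /d !ge_min lexx.
have dd2 : d <= d2 by rewrite /d !ge_min lexx !orbT.
have dd3 : d <= d3 by rewrite /d !ge_min lexx !orbT.
have dd4 : d <= b - z by rewrite /d !ge_min lexx !orbT.
have d0 : 0 < d by rewrite /d !lt_min d10 d20 d30 subr_gt0 zb.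
have zzd : z < z + d by rewrite ltrDl.
have [w [/andP[zw wd] wE]] := pick E zzd.
have wz : `|w - z| < d by rewrite gtr0_norm; lra.
have q1 := H1 w (lt_le_trans wz dd1).
have q2 := H2 w (lt_le_trans wz dd2).
have q3 := H3 w (lt_le_trans wz dd3).
rewrite hornerN oppr_gt0 in q2; rewrite hornerD hornerN subr_gt0 in q3.
have Dw : Dom a b E w by rewrite /Dom wE andbT; apply/andP; split; lra.
have wY : w \notin Y by apply/negP => /pi_root h; rewrite h ltxx in q1.
have wY' : w \notin Y' by apply/negP => /pi_root h; rewrite h ltxx in q2.
have e1 := divdiff_rem F uY wY.
have e2 := divdiff_rem F uY' wY'.
have k1 : 0 <= divdiff F (rcons Y w).
  by apply: HK; rewrite ?size_rcons ?sY ?rcons_uniq ?wY ?uY ?all_rcons ?Dw.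
have k2 : 0 <= divdiff F (rcons Y' w).
  by apply: HK; rewrite ?size_rcons ?sY' ?rcons_uniq ?wY' ?uY' ?all_rcons ?Dw.
have := mulr_ge0 k1 (ltW q1); rewrite e1 => r1.
have := mulr_ge0_le0 k2 (ltW q2); rewrite e2 => r2.
lra.
Qed.


Lemma pi_pos_below s z : all (fun y => y < z) s -> 0 < (pi s).[z].
Proof.
move=> /allP H; rewrite pi_horner big_seq; apply: prodr_gt0 => y ys.
by rewrite subr_gt0 H.
Qed.

Lemma ext a b z E F m : (0 < m)%N -> a < z < b -> z \in E ->
  Kc m.+1 (Dom a b E) F -> exists c, forall Y, size Y = m -> uniq Y ->
  all (Dom a b E) Y -> 0 <= (c - (ip F Y).[z]) / (pi Y).[z].
Proof.
move=> m0 azb zE HK; have /andP[az zb] := azb.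
pose S : set R := fun x => exists Y, [/\ size Y = m, uniq Y, all (Dom a b E) Y,
  0 < (pi Y).[z] & x = (ip F Y).[z]].
have [Y1 [s1 u1 a1 b1]] := points E m az.
have D1 : all (Dom a b E) Y1.
  apply/allP => y y1; move/allP: a1 => /(_ y y1) /andP[ay yz].
  move/allP: b1 => /(_ y y1) yE; rewrite /Dom yE andbT ay /=; lra.
have P1 : 0 < (pi Y1).[z].
  by apply: pi_pos_below; apply/allP => y /(allP a1) /andP[].
have [Y0 [s0 u0 a0 b0]] := points E m.-1 az.
have [w [/andP[zw wb] wE]] := pick E zb.
have w0 : w \notin Y0.
  by apply/negP => /(allP a0) /andP[_ wz]; lra.
pose Y2 := w :: Y0.
have s2 : size Y2 = m by rewrite /= s0 prednK.
have u2 : uniq Y2 by rewrite /= w0 u0.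
have D2 : all (Dom a b E) Y2.
  rewrite /= /Dom wE andbT; apply/andP; split; first by apply/andP; split; lra.
  apply/allP => y y1; move/allP: a0 => /(_ y y1) /andP[ay yz].
  move/allP: b0 => /(_ y y1) yE; rewrite /Dom yE andbT ay /=; lra.
have P2 : (pi Y2).[z] < 0.
  rewrite /Y2 /pi big_cons hornerM hornerXsubC -/(pi Y0).
  rewrite pmulr_llt0 ?subr_lt0 //.
  by apply: pi_pos_below; apply/allP => y /(allP a0) /andP[].
have hS : has_sup S.
  split; first by exists (ip F Y1).[z], Y1.
  exists (ip F Y2).[z] => x [Y [sY uY DY pY ->]].
  exact: (key azb HK sY s2 uY u2 DY D2 pY P2).
exists (sup S) => Y sY uY DY.
have zY : z \notin Y.
  by apply/negP => /(allP DY); rewrite /Dom zE andbF.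
have : (pi Y).[z] != 0.
  by apply/negP => /eqP h; move: zY; rewrite -root_prod_XsubC -/(pi Y) /root h eqxx.
rewrite neq_lt => /orP[pn|pp].
  apply: mulr_le0; last by rewrite invr_le0 ltW.
  rewrite subr_le0; apply: ge_sup; first by exists (ip F Y1).[z], Y1.
  move=> x [Y' [sY' uY' DY' pY' ->]]; exact: (key azb HK sY' sY uY' uY DY' DY pY' pn).
apply: divr_ge0; last exact: ltW.
rewrite subr_ge0; apply: (sup_upper_bound hS); by exists Y.
Qed.


Lemma Glem a b (Zs E : seq R) (F : R -> R) : {subset Zs <= E} ->
  all (fun z => a < z < b) Zs -> Kc (size Zs).+1 (Dom a b E) F ->
  exists r : {poly R}, (size r <= size Zs)%N /\
    forall x, Dom a b E x -> 0 <= (F x - r.[x]) * (pi Zs).[x].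
Proof.
elim: Zs E F => [|z Zs IH] E F sub az HK.
  exists 0; split; first by rewrite size_poly0.
  move=> x Dx; rewrite pi_horner big_nil mulr1 horner0 subr0.
  by have := HK [:: x] erefl erefl; rewrite /= Dx => /(_ erefl).
have zE : z \in E by apply: sub; rewrite inE eqxx.
move: az => /= /andP[azb az].
have [c Hc] := ext (ltn0Sn _) azb zE HK.
pose Ft x := if x == z then c else F x.
pose Fc x := (F x - c) / (x - z).
have HKc : Kc (size Zs).+1 (Dom a b E) Fc.
  move=> Y sY uY DY.
  have zY : z \notin Y by apply/negP => /(allP DY); rewrite /Dom zE andbF.
  have uzY : uniq ([:: z] ++ Y) by rewrite /= zY uY.
  have Y0 : Y != [::] by case: (Y) sY.
  rewrite (@divdiff_eq _ Fc (fun x => divdiff Ft (rcons [:: z] x))) //; last first.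
    move=> x xY /=; rewrite (divdiff_rec Ft z [::] x) /= !divdiff1 /Ft eqxx.
    by have -> : (x == z) = false by apply/negbTE; apply: contraNneq zY => <-.
  rewrite divdiff_dd // (divdiff_perm Ft uzY (_ : perm_eq _ (rcons Y z))); last first.
    by rewrite perm_sym perm_rcons.
  have pz : (pi Y).[z] != 0.
    by apply/negP => /eqP h; move: zY; rewrite -root_prod_XsubC -/(pi Y) /root h eqxx.
  have := divdiff_rem Ft uY zY; rewrite (@ip_eq _ Ft F); last first.
    by move=> x xY; rewrite /Ft; have -> : (x == z) = false by apply/negbTE; apply: contraNneq zY => <-.
  rewrite /Ft eqxx => /(canRL (mulfK pz)) ->; exact: Hc.
have subZ : {subset Zs <= E} by move=> x xZ; apply: sub; rewrite inE xZ orbT.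
have [r' [sr' Hr']] := IH E Fc subZ az HKc.
exists (c%:P + ('X - z%:P) * r'); split.
  rewrite (leq_trans (size_polyD _ _)) // geq_max /= (leq_trans (size_polyC_leq1 _)) //=.
  by rewrite (leq_trans (size_polyMleq _ _)) // size_XsubC.
move=> x Dx; have xz : x - z != 0.
  by rewrite subr_eq0; apply/negP => /eqP xz; move: Dx; rewrite /Dom xz zE andbF.
have E1 : (pi (z :: Zs)).[x] = (x - z) * (pi Zs).[x].
  by rewrite /pi big_cons hornerM hornerXsubC.
have := Hr' x Dx; rewrite E1 hornerD hornerC hornerM hornerXsubC.
set P := (pi Zs).[x]; set q := r'.[x] => h.
have -> : (F x - (c + (x - z) * q)) * ((x - z) * P) = (x - z) ^+ 2 * ((Fc x - q) * P).
  by rewrite /Fc; field.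
by rewrite mulr_ge0 // sqr_ge0.
Qed.

End Real.

Unset Implicit Arguments.
Set Strict Implicit.

Theorem corollary3 (R : realType) (n : nat) (a b : R) (f : R -> R)
  (x : 'I_n.+1 -> R) :
  (0 < n)%N -> a < b ->
  mconvex_on (2 * n).-1 a b f ->
  x ord0 = a -> x ord_max = b ->
  (forall i : 'I_n.+1, (0 < i)%N -> (i < n)%N -> a < x i < b) ->
  exists p : {poly R},
    [/\ (size p <= 2 * n)%N,
        (forall i : 'I_n.+1, p.[x i] = f (x i)) &
        (forall y : R, a <= y <= b -> f y <= p.[y])].
Proof.
move=> n0 ab Hconv x0 xn hx.
pose I0 := [seq x (inord i) | i <- iota 1 n.-1].
have I0in : forall y, y \in I0 -> a < y < b.
  move=> y /mapP [i]; rewrite mem_iota => /andP[i1 i2] ->.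
  apply: hx; rewrite inordK; lia.
pose Zs0 := undup I0.
have sZ0 : (size Zs0 <= n.-1)%N by rewrite (leq_trans (size_undup _)) // size_map size_iota.
have [Ex [sEx uEx aEx bEx]] := points Zs0 (n.-1 - size Zs0) ab.
pose Zs := Zs0 ++ Ex.
have sZ : size Zs = n.-1 by rewrite size_cat sEx subnKC.
have uZ : uniq Zs.
  rewrite cat_uniq undup_uniq uEx andbT /=; apply/hasPn => y /(allP bEx) //.
have aZ : all (fun z => a < z < b) Zs.
  rewrite all_cat aEx andbT; apply/allP => y; rewrite mem_undup; exact: I0in.
have aZ' : forall y, y \in Zs -> a < y < b by move=> y /(allP aZ).
pose N := a :: b :: Zs.
have uN : uniq N.
  rewrite /N /= uZ andbT inE negb_or lt_eqF //=; apply/andP; split.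
    by apply/negP => /aZ' /andP[]; rewrite ltxx.
  by apply/negP => /aZ' /andP[_]; rewrite ltxx.
pose F y := divdiff f (rcons N y).
have HK : Kc (size Zs).+1 (Dom a b Zs) F.
  move=> Y sY uY DY.
  have uNY : uniq (N ++ Y).
    rewrite cat_uniq uN uY andbT; apply/hasPn => y /(allP DY) /andP[/andP[ay yb] yZ].
    rewrite /N !inE !negb_or yZ andbT; apply/andP; split; apply/negP => /eqP ?; lra.
  rewrite /F divdiff_dd //; last by case: (Y) sY.
  apply: Hconv => //.
    rewrite size_cat /= sY sZ; lia.
  rewrite all_cat /= !lexx (ltW ab) /=; apply/andP; split.
    by apply/allP => y /aZ' /andP[h1 h2]; rewrite !ltW.
  by apply/allP => y /(allP DY) /andP[/andP[h1 h2] _]; rewrite !ltW.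
have [r [sr Hr]] := Glem (fun y (h : y \in Zs) => h) aZ HK.
exists (ip f N + pi N * r).
have interp : forall y, y \in N -> (ip f N + pi N * r).[y] = f y.
  by move=> y yN; rewrite hornerD hornerM pi_root // mul0r addr0 ip_interp.
split.
- rewrite (leq_trans (size_polyD _ _)) // geq_max (leq_trans (size_ip _ _)) /=; last first.
    by rewrite /N /= sZ; lia.
  rewrite (leq_trans (size_polyMleq _ _)) // size_pi /N /= sZ; rewrite sZ in sr; rewrite -!subn1 in sr *; move: (size r) sr n0 => k; clear; lia.
- move=> i; apply: interp.
  have [i0|i0] := posnP i.
    have -> : i = ord0 by apply/val_inj.
    by rewrite x0 inE eqxx.
  have [in_|in_] := ltnP i n.
    rewrite /N !inE mem_cat mem_undup; apply/orP; right; apply/orP; right; apply/orP; left.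
    apply/mapP; exists (nat_of_ord i); first by rewrite mem_iota; lia.
    by congr x; apply/val_inj; rewrite /= inordK //; lia.
  have -> : i = ord_max by apply/val_inj; have := ltn_ord i; rewrite /=; lia.
  by rewrite xn !inE eqxx orbT.
- move=> y /andP[ay yb].
  case: (boolP (y \in N)) => yN; first by rewrite interp.
  have Dy : Dom a b Zs y.
    move: yN; rewrite /N !inE !negb_or => /and3P[ya yb' yZ].
    rewrite /Dom yZ andbT; apply/andP; split; rewrite lt_neqAle ?ay ?yb ?andbT //.
    by rewrite eq_sym.
  have e := divdiff_rem f uN yN.
  have h := Hr y Dy.
  have EN : (pi N).[y] = (y - a) * ((y - b) * (pi Zs).[y]).
    by rewrite /N /pi !big_cons !hornerM !hornerXsubC.
  rewrite -/(F y) EN in e.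
  rewrite hornerD hornerM EN.
  move: e h; set P := (pi Zs).[y]; set q := r.[y]; set Fy := F y => e h.
  have -> : (ip f N).[y] = f y - Fy * ((y - a) * ((y - b) * P)) by rewrite e; ring.
  rewrite -subr_ge0.
  have -> : f y - Fy * ((y - a) * ((y - b) * P)) + (y - a) * ((y - b) * P) * q - f y
    = ((y - a) * (b - y)) * ((Fy - q) * P) by ring.
  by rewrite mulr_ge0 // mulr_ge0 // subr_ge0.
Qed.
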